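(* Let $\Lambda\subseteq\mathbb{R}^d$ be a $d$-dimensional lattice, $F\colon K\to\mathbb{R}$ a $\Lambda$-periodic filter on a $\Lambda$-periodic cell complex $K$, and $\mathcal{M}=\mathcal{M}(F,\Lambda)$ its periodic merge tree with frequency function $\Phi$. If a point $B\in\mathcal{M}$ covers another point $A\in\mathcal{M}$, then $\Phi(B)\le\Phi(A)$.
   Context: A cell complex $K$ in $\mathbb{R}^d$ is a locally finite collection of cells (each homeomorphic to a closed ball, boundaries unions of lower-dimensional cells, intersections unions of shared faces). A lattice spanned by linearly independent vectors is the set of their integer combinations; $\mathrm{vol}_p$ is the $p$-volume of its unit cell $\{\sum c_iu_i: c_i\in[0,1)\}$ ($\mathrm{vol}_0(\{0\})=1$). $K$ is $\Lambda$-periodic if $\sigma+u\in K$ for $u\in\Lambda$; a filter $F$ satisfies $F(\sigma)\le F(\tau)$ for faces $\sigma$ of $\tau$ and is $\Lambda$-periodic if $F(\sigma+u)=F(\sigma)$; $K/\Lambda$ is the finite quotient complex on the torus $\mathbb{R}^d/\Lambda$, $F/\Lambda$ the quotient filter. The periodic merge tree $\mathcal{M}(F,\Lambda)$ is the merge tree of $F/\Lambda$: the quotient of $\{(x,s): x\in(K/\Lambda)_s\}$ ($(K/\Lambda)_s=(F/\Lambda)^{-1}(-\infty,s]$) by $(x,s)\sim(y,t)$ iff $s=t$ and $x,y$ are in the same connected component of $(K/\Lambda)_s$, with quotient topology and height $h$ (the $s$-coordinate); points are identified with components of sublevel sets, and $B$ covers $A$ if $h(A)\le h(B)$ and $A\subseteq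 B$. For a component $\Gamma$, with $\phi\colon\mathbb{R}^d\to\mathbb{R}^d/\Lambda$ the projection, a shadow is a component of $\phi^{-1}(\Gamma)$, the periodicity lattice is $\Lambda_\Gamma=\{u\in\Lambda:\gamma+u=\gamma\}$ for some (equivalently every) shadow $\gamma$, $p=\dim\Lambda_\Gamma$, and the frequency function is $\Phi(\Gamma)=\frac{\mathrm{vol}_p(\Lambda_\Gamma)}{\mathrm{vol}_d(\Lambda)}\nu_{d-p}R^{d-p}$ ($\nu_q$ the volume of the unit $q$-ball). Monomials are ordered by $tR^a<sR^b$ iff $a<b$, or $a=b$ and $t<s$; $\le$ allows equality. *)

(* Defs.v *)
From HB Require Import structures.
From mathcomp Require Import all_boot all_order all_algebra generic_quotient.
From mathcomp Require Import all_classical all_reals.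
From mathcomp Require Import all_analysis.

Set Implicit Arguments.
Unset Strict Implicit.
Unset Printing Implicit Defensive.

Import Order.TTheory GRing.Theory Num.Theory.
Import numFieldNormedType.Exports.
Local Open Scope classical_set_scope.
Local Open Scope ring_scope.

Section PeriodicMergeTrees.
Variable R : realType.

Definition latt (p d : nat) (M : 'M[R]_(p, d)) : set 'rV[R]_d :=
  [set x | exists z : 'rV[int]_p, x = map_mx (fun k : int => k%:~R) z *m M].

(* p-volume of the unit cell of the lattice spanned by the (linearly
   independent) rows of M : sqrt of the Gram determinant; equals 1 for p = 0. *)
Definition latt_vol (p d : nat) (M : 'M[R]_(p, d)) : R :=
  Num.sqrt (\det (M *m M^T)).

Definition is_latt_dim_vol (d : nat) (L : set 'rV[R]_d) (pv : nat * R) : Prop :=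
  exists M : 'M[R]_(pv.1, d), [/\ row_free M, L = latt M & pv.2 = latt_vol M].

(* dimension and volume of a lattice (chosen; independent of the basis) *)
Definition latt_dim_vol (d : nat) (L : set 'rV[R]_d) : nat * R :=
  xget (0%N, 0) (is_latt_dim_vol L).

Section Torus.
Variables (d : nat) (Bm : 'M[R]_d).

Definition latt_rel (x y : 'rV[R]_d) : bool := `[< latt Bm (x - y) >].

Lemma latt_rel_refl : reflexive latt_rel.
Proof.
move=> x; apply/asboolP; exists 0; by rewrite subrr map_mx0 mul0mx.
Qed.

Lemma latt_rel_sym : symmetric latt_rel.
Proof.
suff H : forall x y, latt_rel x y -> latt_rel y x.
  by move=> x y; apply/idP/idP; apply: H.
move=> x y /asboolP [z Hz]; apply/asboolP; exists (- z).
by rewrite map_mxN mulNmx -Hz opprB.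
Qed.

Lemma latt_rel_trans : transitive latt_rel.
Proof.
move=> y x z /asboolP [a Ha] /asboolP [b Hb]; apply/asboolP; exists (a + b).
by rewrite map_mxD mulmxDl -Ha -Hb addrA subrK.
Qed.

Definition latt_equiv := EquivRel _ latt_rel_refl latt_rel_sym latt_rel_trans.

Local Open Scope quotient_scope.
Definition torus := {eq_quot latt_equiv}.
HB.instance Definition _ := Topological.copy torus (quotient_topology torus).
HB.instance Definition _ := Quotient.on torus.

Definition proj_torus : 'rV[R]_d -> torus := \pi_torus.

End Torus.

Definition enorm (k : nat) (x : 'rV[R]_k) : R := Num.sqrt (\sum_i x 0 i ^+ 2).
Definition cball (k : nat) : set 'rV[R]_k := [set x | enorm x <= 1].
Definition csphere (k : nat) : set 'rV[R]_k := [set x | enorm x = 1].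
Arguments cball : clear implicits.
Arguments csphere : clear implicits.

Definition ball_homeo (k d : nat) (f : 'rV[R]_k -> 'rV[R]_d) (sigma : set 'rV[R]_d) :=
  exists g : 'rV[R]_d -> 'rV[R]_k,
    [/\ {within cball k, continuous f}, {within sigma, continuous g},
        f @` cball k = sigma,
        (forall x, cball k x -> g (f x) = x) & (forall y, sigma y -> f (g y) = y)].

Definition is_cell (d k : nat) (sigma : set 'rV[R]_d) :=
  exists f : 'rV[R]_k -> 'rV[R]_d, ball_homeo f sigma.

Definition translate (d : nat) (u : 'rV[R]_d) (A : set 'rV[R]_d) :=
  [set x + u | x in A].

Definition cell_complex (d : nat) (K : set (set 'rV[R]_d)) : Prop :=
  [/\
      (forall sigma, K sigma -> exists (k : nat) (f : 'rV[R]_k -> 'rV[R]_d),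
          ball_homeo f sigma /\
          f @` csphere k = \bigcup_(tau in [set tau | K tau /\ tau `<=` f @` csphere k
                                      /\ exists2 j, (j < k)%N & is_cell j tau]) tau),
      (forall sigma tau, K sigma -> K tau ->
          sigma `&` tau = \bigcup_(rho in [set rho | K rho /\ rho `<=` sigma /\ rho `<=` tau]) rho)
    &
      (forall x : 'rV[R]_d, exists2 U, nbhs x U &
          finite_set [set sigma | K sigma /\ sigma `&` U !=set0])].

Definition periodic_complex (d : nat) (Bm : 'M[R]_d) (K : set (set 'rV[R]_d)) :=
  forall sigma u, K sigma -> latt Bm u -> K (translate u sigma).

Definition is_filter (d : nat) (K : set (set 'rV[R]_d)) (F : set 'rV[R]_d -> R) :=
  forall sigma tau, K sigma -> K tau -> sigma `<=` tau -> F sigma <= F tau.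

Definition periodic_filter (d : nat) (Bm : 'M[R]_d) (K : set (set 'rV[R]_d))
    (F : set 'rV[R]_d -> R) :=
  forall sigma u, K sigma -> latt Bm u -> F (translate u sigma) = F sigma.

(* (K/Lambda)_s, as a subset of the torus : image of the cells with F <= s *)
Definition torus_sublevel (d : nat) (Bm : 'M[R]_d) (K : set (set 'rV[R]_d))
    (F : set 'rV[R]_d -> R) (s : R) : set (torus Bm) :=
  proj_torus Bm @` \bigcup_(sigma in [set sigma | K sigma /\ F sigma <= s]) sigma.

Definition is_component {T : topologicalType} (S G : set T) :=
  exists2 x, S x & G = connected_component S x.

Definition is_shadow (d : nat) (Bm : 'M[R]_d) (Gam : set (torus Bm))
    (gam : set 'rV[R]_d) := is_component (proj_torus Bm @^-1` Gam) gam.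

Definition period_latt (d : nat) (Bm : 'M[R]_d) (gam : set 'rV[R]_d) :=
  [set u | latt Bm u /\ translate u gam = gam].

(* volume of the unit q-ball *)
Fixpoint nu (q : nat) : R :=
  match q with
  | 0%N => 1
  | 1%N => 2
  | (q'.+2)%N => (2 * pi) / (q'.+2)%:R * nu q'
  end.

(* monomials t R^a are encoded as pairs (a, t) *)
Definition mono_le (m1 m2 : nat * R) : Prop :=
  (m1.1 < m2.1)%N \/ (m1.1 = m2.1 /\ m1.2 <= m2.2).

Definition freq (d : nat) (Bm : 'M[R]_d) (Gam : set (torus Bm)) : nat * R :=
  let gam := xget set0 (is_shadow Gam) in
  let pv := latt_dim_vol (period_latt Bm gam) in
  ((d - pv.1)%N, pv.2 / latt_vol Bm * nu (d - pv.1)).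

End PeriodicMergeTrees.

Arguments torus_sublevel {R d} Bm K F s.
Arguments freq {R d Bm} Gam.

(* Main.v *)
Require Import Defs.
From HB Require Import structures.
From mathcomp Require Import all_boot all_order all_algebra generic_quotient.
From mathcomp Require Import all_classical all_reals.
From mathcomp Require Import all_analysis.
From mathcomp Require Import ring lra zify.
Import Order.TTheory GRing.Theory Num.Theory.
Import numFieldNormedType.Exports.
Local Open Scope classical_set_scope.
Local Open Scope ring_scope.
Set Implicit Arguments.
Unset Strict Implicit.
Unset Printing Implicit Defensive.

Section P1.
Variables (R : realType) (d : nat) (Bm : 'M[R]_d).
Local Notation phi := (proj_torus Bm).
Local Notation L := (latt Bm).

Lemma latt0 : L 0.
Proof. by exists 0; rewrite map_mx0 mul0mx. Qed.
Lemma lattD u v : L u -> L v -> L (u + v).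
Proof. by move=> [a ->] [b ->]; exists (a + b); rewrite map_mxD mulmxDl. Qed.
Lemma lattN u : L u -> L (- u).
Proof. by move=> [a ->]; exists (- a); rewrite map_mxN mulNmx. Qed.
Lemma lattB u v : L u -> L v -> L (u - v).
Proof. by move=> lu lv; apply: lattD => //; apply: lattN. Qed.

Lemma phiP x y : phi x = phi y <-> L (x - y).
Proof.
split.
  by move=> /eqmodP/asboolP.
by move=> h; apply/eqmodP; apply/asboolP.
Qed.

Lemma phiD x u : L u -> phi (x + u) = phi x.
Proof. by move=> lu; apply/phiP; rewrite addrC addKr. Qed.

Lemma phi_surj (q : torus Bm) : exists x, phi x = q.
Proof. by exists (repr q); rewrite /proj_torus reprK. Qed.

Lemma phi_cont : continuous phi.
Proof. exact: pi_continuous. Qed.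

Lemma translateE u (A : set 'rV[R]_d) x : translate u A x <-> A (x - u).
Proof.
split; first by move=> [y Ay <-]; rewrite addrK.
by move=> h; exists (x - u) => //; rewrite subrK.
Qed.

Lemma translateK u (A : set 'rV[R]_d) : translate (- u) (translate u A) = A.
Proof.
apply/seteqP; split => x.
  by move/translateE; rewrite opprK => /translateE; rewrite addrK.
by move=> Ax; apply/translateE; rewrite opprK; apply/translateE; rewrite addrK.
Qed.

Lemma translate_comp u v (A : set 'rV[R]_d) :
  translate u (translate v A) = translate (v + u) A.
Proof.
apply/seteqP; split => x.
  by move=> /translateE /translateE h; apply/translateE; rewrite opprD addrA addrAC.
by move=> /translateE h; apply/translateE/translateE; rewrite addrAC -addrA -opprD.
Qed.

Lemma translateC u v (A : set 'rV[R]_d) :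
  translate u (translate v A) = translate v (translate u A).
Proof. by rewrite !translate_comp addrC. Qed.

Lemma translate_sub u (A B : set 'rV[R]_d) : A `<=` B -> translate u A `<=` translate u B.
Proof. by move=> AB x [y /AB By <-]; exists y. Qed.

Lemma shift_cont (u : 'rV[R]_d) : continuous (fun x : 'rV[R]_d => x + u).
Proof. by move=> x; apply: continuousD; [by [] | exact: cst_continuous]. Qed.

Lemma translate_connected u (A : set 'rV[R]_d) : connected A -> connected (translate u A).
Proof.
move=> cA; apply: (connected_continuous_connected cA).
by apply: continuous_subspaceT; apply: shift_cont.
Qed.

Lemma translate_open u (A : set 'rV[R]_d) : open A -> open (translate u A).
Proof.
move=> oA.
have -> : translate u A = (fun x => x + - u) @^-1` A.
  by apply/seteqP; split => x /translateE.
by move/continuousP: (@shift_cont (- u)); apply.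
Qed.

Definition linv (P : set 'rV[R]_d) := forall x u, L u -> P x -> P (x + u).

Lemma linvN (P : set 'rV[R]_d) x u : linv P -> L u -> P (x + u) -> P x.
Proof. by move=> hP lu h; have := hP _ _ (lattN lu) h; rewrite addrK. Qed.

Lemma cc_translate (P : set 'rV[R]_d) x u : linv P -> L u ->
  translate u (connected_component P x) = connected_component P (x + u).
Proof.
move=> hP lu.
have gen : forall x u, L u -> translate u (connected_component P x) `<=` connected_component P (x + u).
  move=> y v lv.
  have [Py|nPy] := pselect (P y); last first.
    by rewrite connected_component_out // => z [w []].
  apply: connected_component_max.
  - by exists y => //; apply: connected_component_refl.
  - by move=> z [w /connected_component_sub Pw <-]; apply: hP.
  - by apply: translate_connected; apply: component_connected.
apply/seteqP; split; first exact: gen.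
have := gen (x + u) (- u) (lattN lu); rewrite addrK => h.
move=> z hz; apply/translateE; apply: h; apply/translateE.
by rewrite opprK subrK.
Qed.
End P1.
Section P2.
Variable R : realType.

Lemma sum_cont k (r : seq 'I_k) (f : 'I_k -> 'rV[R]_k -> R) :
  (forall i, continuous (f i)) -> continuous (fun x => \sum_(i <- r) f i x).
Proof.
move=> hf; elim: r => [|i r IH].
  by under eq_fun do rewrite big_nil; exact: cst_continuous.
under eq_fun do rewrite big_cons.
by move=> x; apply: continuousD; [exact: hf | exact: IH].
Qed.

Lemma sqsum_cont k : continuous (fun x : 'rV[R]_k => \sum_i x 0 i ^+ 2).
Proof.
apply: sum_cont => i x.
have -> : (fun x : 'rV[R]_k => x 0 i ^+ 2) = (fun x => x 0 i * x 0 i).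
  by apply: funext => y; rewrite expr2.
by apply: continuousM; apply: coord_continuous.
Qed.

Lemma enorm_cont k : continuous (@enorm R k).
Proof.
move=> x; rewrite /enorm.
apply: (@continuous_comp _ _ _ (fun x : 'rV[R]_k => \sum_i x 0 i ^+ 2) Num.sqrt).
  exact: sqsum_cont.
exact: sqrt_continuous.
Qed.

Lemma cball_closed k : closed (@cball R k).
Proof.
have -> : @cball R k = @enorm R k @^-1` [set x | x <= 1] by [].
by move/continuous_closedP: (@enorm_cont k); apply; apply: closed_le.
Qed.

Lemma sqsum_ge0 k (x : 'rV[R]_k) : 0 <= \sum_i x 0 i ^+ 2.
Proof. by apply: sumr_ge0 => i _; apply: sqr_ge0. Qed.

Lemma cball_sq k (x : 'rV[R]_k) : @cball R k x -> \sum_i x 0 i ^+ 2 <= 1.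
Proof.
rewrite /cball /enorm /= => h.
have := sqr_sqrtr (sqsum_ge0 x) => <-.
have h0 := sqrtr_ge0 (\sum_i x 0 i ^+ 2).
set s := Num.sqrt _ in h h0 *; rewrite expr2; nra.
Qed.

Lemma cball_coord k (x : 'rV[R]_k) i : @cball R k x -> `|x 0 i| <= 1.
Proof.
move=> /cball_sq h.
have : x 0 i ^+ 2 <= 1.
  apply: le_trans h; rewrite (bigD1 i) //= lerDl.
  by apply: sumr_ge0 => j _; apply: sqr_ge0.
move=> h2; set a := x 0 i in h2 *; rewrite expr2 in h2.
case: (lerP 0 a) => ha; [rewrite ger0_norm // | rewrite ltr0_norm //]; nra.
Qed.

Lemma cball_bounded k : bounded_set (@cball R k).
Proof.
rewrite /=; exists 1; split => // M M1 x /cball_coord h.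
rewrite /=; have -> : `|x| = mx_norm x by [].
rewrite mx_normrE; apply: (le_trans _ (ltW M1)).
apply: bigmax_le => // [[i j]] _ /=.
by rewrite (ord1 i); apply: h.
Qed.

Lemma cball_compact k : compact (@cball R k).
Proof. exact: bounded_closed_compact (@cball_bounded k) (@cball_closed k). Qed.

Lemma enormZ k (t : R) (x : 'rV[R]_k) : 0 <= t <= 1 -> @cball R k x -> @cball R k (t *: x).
Proof.
move=> /andP[t0 t1]; rewrite /cball /enorm /= => h; apply: le_trans h.
rewrite ler_sqrt; last exact: sqsum_ge0.
apply: ler_sum => i _; rewrite mxE exprMn -[leRHS]mul1r.
apply: ler_wpM2r; first exact: sqr_ge0.
by rewrite expr2; nra.
Qed.

Lemma cball_connected k : connected (@cball R k).
Proof.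
have -> : @cball R k = \bigcup_(x in @cball R k) ((fun t : R => t *: x) @` `[0, 1]%classic).
  apply/seteqP; split => [x hx|x [y hy [t ht <-]]].
    by exists x => //; exists 1; [rewrite /= in_itv /= lexx ler01 | rewrite scale1r].
  by apply: enormZ => //; move: ht; rewrite /= in_itv.
apply: bigcup_connected.
  exists 0 => y hy; exists 0; first by rewrite /= in_itv /= lexx ler01.
  by rewrite scale0r.
move=> x hx; apply: connected_continuous_connected.
  by apply/connected_intervalP; apply: interval_is_interval.
by apply: continuous_subspaceT; apply: scalel_continuous.
Qed.


Lemma cell_props d (K : set (set 'rV[R]_d)) sigma : cell_complex K -> K sigma ->
  connected sigma /\ closed sigma.
Proof.
move=> [hc _ _] /hc [k [f [[g [fc _ fim _ _] _]]]].
rewrite -fim; split.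
  exact: connected_continuous_connected (@cball_connected k) fc.
apply: compact_closed; first exact: norm_hausdorff.
exact: continuous_compact fc (@cball_compact k).
Qed.
End P2.
Section P3.
Variables (R : realType) (d : nat) (K : set (set 'rV[R]_d)) (F : set 'rV[R]_d -> R).
Hypothesis hK : cell_complex K.
Hypothesis cellP : forall sigma, K sigma -> connected sigma /\ closed sigma.

Definition Yset (t : R) := \bigcup_(sigma in [set sigma | K sigma /\ F sigma <= t]) sigma.

Lemma Y_local t x : Yset t x -> exists N, [/\ open N, N x &
  exists C, [/\ connected C, C x, C `<=` Yset t & Yset t `&` N `<=` C]].
Proof.
move=> [s0 [Ks0 Fs0] s0x].
case: hK => _ _ /(_ x) [U Ux finU].
pose Fin := [set sigma | (K sigma /\ sigma `&` U !=set0) /\ F sigma <= t].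
have finF : finite_set Fin by apply: sub_finite_set finU => s [].
pose Fout := [set sigma | Fin sigma /\ ~ sigma x].
have finO : finite_set Fout by apply: sub_finite_set finF => s [].
pose Cl := \bigcup_(sigma in Fout) sigma.
have clCl : closed Cl.
  by apply: closed_bigcup => // s [[[Ks _] _] _]; case: (cellP Ks).
have nClx : ~ Cl x by move=> [s [_ nsx] sx].
have N0x : nbhs x (U `&` ~` Cl).
  apply: filterI => //; apply: open_nbhs_nbhs; split => //.
  exact: closed_openC.
move: N0x; rewrite nbhsE => -[N [oN Nx] NN0].
exists N; split => //.
pose C := \bigcup_(sigma in [set sigma | Fin sigma /\ sigma x]) sigma.
have Ux' : U x by apply: nbhs_singleton.
exists C; split.
- apply: bigcup_connected.
    by exists x => s [].
  by move=> s [[[Ks _] _] _]; case: (cellP Ks).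
- exists s0 => //; split => //; split => //; split => //.
  by exists x.
- by move=> z [s [[[Ks _] Fs] _] sz]; exists s.
- move=> z [[s [Ks Fs] sz] Nz].
  have [Uz nClz] := NN0 _ Nz.
  have Fins : Fin s by split => //; split => //; exists z.
  have [sx|nsx] := pselect (s x); first by exists s.
  by exfalso; apply: nClz; exists s.
Qed.
End P3.

Section P4.
Variables (R : realType) (d : nat) (Bm : 'M[R]_d).
Local Notation phi := (proj_torus Bm).
Local Notation L := (latt Bm).

Lemma phi_open (O : set 'rV[R]_d) : open O -> open (phi @` O).
Proof.
move=> oO.
suff : open (phi @^-1` (phi @` O)) by [].
have -> : phi @^-1` (phi @` O) = \bigcup_(u in L) translate u O.
  apply/seteqP; split => z.
    move=> [w Ow /phiP hz]; exists (z - w).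
      by rewrite -opprB; apply: lattN.
    by apply/translateE; rewrite opprB addrC subrK.
  move=> [u Lu hu]; have h := (translateE u O z).1 hu.
  exists (z - u); first exact: h.
  by rewrite -{2}(subrK u z) (phiD _ Lu).
by apply: bigcup_open => u _; apply: translate_open.
Qed.

Section Shadow.
Variable B : set (torus Bm).
Hypothesis cB : connected B.
Let P := phi @^-1` B.
Hypothesis LP : forall x, P x -> exists N, [/\ open N, N x & P `&` N `<=` connected_component P x].

Lemma linvP : linv Bm P.
Proof. by move=> x u Lu Px; rewrite /P /preimage /= phiD. Qed.

Lemma shadow_all y x : P y -> P x -> exists2 w, L w & connected_component P y (x - w).
Proof.
move=> Py Px.
pose S := phi @` connected_component P y.
have SB : S = B.
  apply: cB.
  - by exists (phi y); exists y => //; apply: connected_component_refl.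
  - pose O := \bigcup_(N in [set N | open N /\ P `&` N `<=` connected_component P y]) N.
    exists (phi @` O).
      by apply: phi_open; apply: bigcup_open => N [].
    apply/seteqP; split.
      move=> q [g gy <-]; split.
        exact: (connected_component_sub gy).
      have Pg := connected_component_sub gy.
      have [N [oN Ng NP]] := LP Pg.
      exists g => //; exists N => //; split => //.
      by rewrite (same_connected_component gy).
    move=> q [Bq [w [N [oN NP] Nw] wq]].
    exists w => //; apply: NP; split => //.
    by rewrite /P /preimage /= wq.
  - pose O2 := \bigcup_(N in [set N | open N /\ P `&` N `&` (phi @^-1` S) `<=` set0]) N.
    exists (~` (phi @` O2)).
      by apply: open_closedC; apply: phi_open; apply: bigcup_open => N [].
    apply/seteqP; split.
      move=> q [g gy <-]; split.
        exact: (connected_component_sub gy).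
      move=> [w [N [oN NP] Nw] wq].
      apply: (NP w); split; [split|] => //.
        by rewrite /P /preimage /= wq; exact: (connected_component_sub gy).
      by rewrite /preimage /= wq; exists g.
    move=> q [Bq nO2].
    apply: contrapT => nSq.
    have [x0 x0q] := phi_surj q.
    have Px0 : P x0 by rewrite /P /preimage /= x0q.
    have [N [oN Nx0 NP]] := LP Px0.
    apply: nO2; exists x0 => //; exists N => //; split => //.
    move=> z [[Pz Nz] [g gy gz]].
    have zx0 : connected_component P x0 z by apply: NP.
    have Lu : L (z - g) by apply/phiP.
    have := cc_translate g (linvP) Lu; have -> : g + (z - g) = z by rewrite addrC subrK.
    rewrite -(same_connected_component zx0) -(same_connected_component gy) => E.
    have : connected_component P x0 x0 by apply: connected_component_refl.
    rewrite -E => /translateE hx.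
    apply: nSq; rewrite -x0q; exists (x0 - (z - g)) => //.
    by rewrite -{2}(subrK (z - g) x0) (phiD _ Lu).
have : B (phi x) by [].
rewrite -SB => -[g gy gx].
exists (x - g); first by apply/phiP; rewrite gx.
by rewrite opprB addrC subrK.
Qed.

Lemma shadow_translate y x : P y -> P x -> exists2 w, L w &
  connected_component P x = translate w (connected_component P y).
Proof.
move=> Py Px; have [w Lw h] := shadow_all Py Px.
exists w => //.
rewrite (same_connected_component h) (cc_translate _ (linvP) Lw).
by rewrite subrK.
Qed.
End Shadow.
End P4.

Section P5.
Variables (R : realType) (d : nat).
Local Notation intr := (fun k : int => (k%:~R : R)).

Definition subgrp (H : set 'rV[R]_d) := H 0 /\ forall u v, H u -> H v -> H (u - v).

Lemma subgrpN H u : subgrp H -> H u -> H (- u).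
Proof. by move=> [H0 HB] Hu; rewrite -sub0r; apply: HB. Qed.

Lemma subgrpD H u v : subgrp H -> H u -> H v -> H (u + v).
Proof.
move=> sH Hu Hv; rewrite -[v]opprK; apply: sH.2 => //; exact: subgrpN.
Qed.

Lemma subgrpZ H (q : int) u : subgrp H -> H u -> H (q%:~R *: u).
Proof.
move=> sH Hu.
have hn : forall n : nat, H (n%:R *: u).
  elim=> [|n IH]; first by rewrite scale0r; exact: sH.1.
  by rewrite mulrS scalerDl scale1r; apply: subgrpD.
case: q => n; first exact: hn.
by rewrite NegzE mulrNz scaleNr; apply: subgrpN => //; exact: hn.
Qed.

Lemma latt_subgrp p (M : 'M[R]_(p, d)) : subgrp (latt M).
Proof.
split; first by exists 0; rewrite map_mx0 mul0mx.
by move=> u v [a ->] [b ->]; exists (a - b); rewrite map_mxB mulmxBl.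
Qed.


Lemma latt_split m (C : 'M[R]_(1 + m, d)) u :
  latt C u <-> exists q : int, latt (dsubmx C) (u - q%:~R *: usubmx C).
Proof.
split.
  move=> [z ->]; exists (lsubmx z 0 0); exists (rsubmx z).
  rewrite -{1}(hsubmxK z) -{1}(vsubmxK C) map_row_mx mul_row_col.
  have -> : map_mx intr (lsubmx z) = (intr (lsubmx z 0 0))%:M.
    by apply/matrixP => i j; rewrite !ord1 !mxE /= mulr1n.
  by rewrite mul_scalar_mx addrAC subrr add0r.
move=> [q [z hz]]; exists (row_mx q%:M z).
rewrite -{1}(vsubmxK C) map_row_mx mul_row_col -hz.
have -> : map_mx intr (q%:M : 'M[int]_1) = (intr q)%:M.
  by apply/matrixP => i j; rewrite !ord1 !mxE /= !mulr1n.
by rewrite mul_scalar_mx addrC subrK.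
Qed.

Lemma indep m (C : 'M[R]_(1 + m, d)) : row_free C ->
  forall (c : R) v, c *: usubmx C + v *m dsubmx C = 0 -> c = 0 /\ v = 0.
Proof.
move=> fC c v h.
have : row_mx (c%:M : 'M[R]_1) v *m C == 0.
  by rewrite -{1}(vsubmxK C) mul_row_col mul_scalar_mx h.
rewrite mulmx_free_eq0 // row_mx_eq0 => /andP[/eqP hc /eqP ->]; split => //.
by have := congr1 (fun M : 'M[R]_1 => M 0 0) hc; rewrite !mxE /= mulr1n.
Qed.

Lemma row_free_dsub m (C : 'M[R]_(1 + m, d)) : row_free C -> row_free (dsubmx C).
Proof.
move=> fC; apply: inj_row_free => v hv.
by have [] := indep fC (c := 0) (v := v); rewrite ?scale0r ?add0r.
Qed.


Lemma int_latt_scale p (M : 'M[R]_(p, d)) (q : int) u : latt M u -> latt M (q%:~R *: u).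
Proof. by move=> h; apply: subgrpZ => //; apply: latt_subgrp. Qed.

Lemma subgrp_basis n : forall (Bn : 'M[R]_(n, d)) (H : set 'rV[R]_d),
  row_free Bn -> subgrp H -> H `<=` latt Bn ->
  exists p (M : 'M[R]_(p, d)), row_free M /\ H = latt M.
Proof.
elim: n => [|n IH] Bn H fB sH HL.
  exists 0%N, 0; split; first by rewrite -row_leq_rank.
  apply/seteqP; split => u.
    move=> /HL [z ->]; rewrite (flatmx0 Bn); exists 0.
    by rewrite map_mx0 !mulmx0.
  by move=> [z ->]; rewrite mulmx0; exact: sH.1.
pose C : 'M[R]_(1 + n, d) := Bn.
have fC : row_free C by [].
pose b := usubmx C; pose B' := dsubmx C.
have fB' : row_free B' by apply: row_free_dsub.
have HL' : forall h, H h -> exists q : int, latt B' (h - q%:~R *: b).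
  by move=> h /HL /(@latt_split n C).
pose Cs (k : int) := exists2 h, H h & latt B' (h - k%:~R *: b).
have CsB : forall a c, Cs a -> Cs c -> Cs (a - c).
  move=> a c [ha Ha La] [hc Hc Lc]; exists (ha - hc); first exact: sH.2.
  have -> : ha - hc - (a - c)%:~R *: b = (ha - a%:~R *: b) - (hc - c%:~R *: b).
    by rewrite rmorphB scalerBl opprB opprB addrACA [X in _ = X]addrACA [- _ + _]addrC.
  exact: (latt_subgrp B').2.
have [allz|] := pselect (forall k, Cs k -> k = 0); last first.
-
  move=> /existsNP [k /not_implyP [Csk k0]].
  have Cs0 : Cs 0 by rewrite -(subrr k); apply: CsB.
  have CsN : forall a, Cs a -> Cs (- a) by move=> a ha; rewrite -sub0r; apply: CsB.
  have exP : exists m : nat, (0 < m)%N && `[< Cs m%:Z >].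
    exists `|k|%N. apply/andP. split. rewrite absz_gt0. apply/eqP. exact k0.
    apply/asboolP; case: (ltrP 0 k) => hk.
      by rewrite gez0_abs ?ltW.
    by rewrite lez0_abs //; apply: CsN.
  case: (ex_minnP exP) => k0' /andP[k0pos /asboolP Csk0] k0min.
  have [h0 Hh0 Lh0] := Csk0.
  have k0n0 : (k0'%:Z)%:~R != 0 :> R by rewrite intr_eq0 -lt0n.
  pose H0 := H `&` latt B'.
  have sH0 : subgrp H0.
    split; first by split; [exact: sH.1 | exact: (latt_subgrp B').1].
    by move=> u v [Hu Lu] [Hv Lv]; split; [exact: sH.2 | exact: (latt_subgrp B').2].
  have [p0 [M0 [fM0 H0E]]] := IH B' H0 fB' sH0 (fun h hh => hh.2).
  pose M : 'M[R]_(1 + p0, d) := col_mx h0 M0.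
  have MsplitE : forall u, latt M u <-> exists q : int, latt M0 (u - q%:~R *: h0).
    by move=> u; rewrite (@latt_split p0 M) /M col_mxKu col_mxKd.
  have [z0 hz0] := Lh0.
  have h0E : h0 = (k0'%:Z)%:~R *: b + map_mx intr z0 *m B' by rewrite -hz0 addrC subrK.
  exists (1 + p0)%N, M; split.
    apply: inj_row_free => v hv.
    have hM0 : (M0 <= B')%MS.
      apply/row_subP => i.
      have : latt M0 (row i M0).
        exists (delta_mx 0 i); rewrite rowE; congr (_ *m _).
        by apply/matrixP => a a'; rewrite !mxE mulrz_nat.
      rewrite -H0E => -[_ [z ->]]; exact: submxMl.
    have [w hw] := submxP (submx_trans (submxMl (rsubmx v) M0) hM0).
    have vE : v *m M = lsubmx v 0 0 *: h0 + rsubmx v *m M0.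
      by rewrite -{1}(hsubmxK v) mul_row_col {1}(mx11_scalar (lsubmx v)) mul_scalar_mx.
    set c := lsubmx v 0 0 in vE.
    have : (c * (k0'%:Z)%:~R) *: b + (c *: map_mx intr z0 + w) *m B' = 0.
      rewrite -hv vE hw h0E scalerDr scalerA mulmxDl -scalemxAl addrA //.
    move=> /(indep fC) [/eqP]; rewrite mulf_eq0 (negbTE k0n0) orbF => /eqP c0 _.
    have : rsubmx v *m M0 = 0 by rewrite -hv vE c0 scale0r add0r.
    move/eqP; rewrite mulmx_free_eq0 // => /eqP v'0.
    rewrite -(hsubmxK v) v'0 (mx11_scalar (lsubmx v)) -/c c0.
    by rewrite (_ : (0 : R)%:M = 0) ?row_mx0 //; apply/matrixP => i j; rewrite !mxE mul0rn.
  apply/seteqP; split => u.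
    move=> Hu; have [q Lq] := HL' u Hu.
    set qq := (q %/ k0'%:Z)%Z; set r := (q %% k0'%:Z)%Z.
    have Hh' : H (u - qq%:~R *: h0) by apply: sH.2 => //; apply: subgrpZ.
    have Lh' : latt B' ((u - qq%:~R *: h0) - r%:~R *: b).
      have -> : (u - qq%:~R *: h0) - r%:~R *: b =
                (u - q%:~R *: b) - qq%:~R *: (h0 - (k0'%:Z)%:~R *: b).
        rewrite {1}(divz_eq q k0'%:Z) -/qq -/r.
        apply/matrixP => i j; rewrite !mxE !intrD ?intrN !intrM; ring.
      by apply: (latt_subgrp B').2 => //; apply: int_latt_scale.
    have r0 : r = 0.
      have rge0 : 0 <= r by apply: modz_ge0; rewrite eqz_nat -lt0n.
      have rlt : r < k0'%:Z by apply: ltz_pmod; rewrite ltz_nat.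
      apply: contrapT => rn0.
      have : (k0' <= `|r|)%N.
        apply: k0min; apply/andP; split; first by rewrite absz_gt0; apply/eqP.
        by apply/asboolP; rewrite gez0_abs //; exists (u - qq%:~R *: h0).
      rewrite leqNgt => /negP; apply.
      by rewrite -ltz_nat gez0_abs.
    rewrite r0 scale0r subr0 in Lh'.
    have : H0 (u - qq%:~R *: h0) by split.
    by rewrite H0E => h; apply/MsplitE; exists qq.
  move=> /MsplitE [q Lq].
  rewrite -H0E in Lq; have Hq : H (q%:~R *: h0) by apply: subgrpZ.
  by rewrite -(subrK (q%:~R *: h0) u); apply: subgrpD => //; case: Lq.
-
  apply: (IH B' H fB' sH) => h Hh.
  have [q Lq] := HL' h Hh.
  have Csq : Cs q by exists h.
  by rewrite (allz q Csq) scale0r subr0 in Lq.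
Qed.
End P5.

Section P6.
Variables (R : realType) (d : nat).
Local Notation intr := (fun k : int => (k%:~R : R)).

Lemma row_in_latt p (M : 'M[R]_(p, d)) i : latt M (row i M).
Proof.
exists (delta_mx 0 i); rewrite rowE; congr (_ *m _).
by apply/matrixP => a a'; rewrite !mxE mulrz_nat.
Qed.

Lemma row_free_le p (M : 'M[R]_(p, d)) : row_free M -> (p <= d)%N.
Proof. by rewrite -row_leq_rank => h; apply: leq_trans h (rank_leq_col M). Qed.

Lemma dimvol_cmp (L1 L2 : set 'rV[R]_d) pv1 pv2 :
  L1 `<=` L2 -> is_latt_dim_vol L1 pv1 -> is_latt_dim_vol L2 pv2 ->
  (pv1.1 <= pv2.1)%N /\ (pv1.1 = pv2.1 -> pv2.2 <= pv1.2).
Proof.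
case: pv1 => p1 v1; case: pv2 => p2 v2 /= L12 [M1 [f1 E1 V1]] [M2 [f2 E2 V2]] /=.
have rows : forall i, exists z : 'rV[int]_p2, row i M1 = map_mx intr z *m M2.
  by move=> i; have := row_in_latt M1 i; rewrite -E1 => /L12; rewrite E2 => -[z ->]; exists z.
have [f hf] := choice rows.
pose Zi : 'M[int]_(p1, p2) := \matrix_(i, j) f i 0 j.
have ME : M1 = map_mx intr Zi *m M2.
  apply/row_matrixP => i; rewrite row_mul hf; congr (_ *m _).
  by apply/matrixP => a b; rewrite !mxE (ord1 a).
have rk : (p1 <= \rank (map_mx intr Zi))%N.
  by move: f1; rewrite -row_leq_rank ME => h; apply: leq_trans h (mxrankM_maxl _ _).
split; first by apply: leq_trans rk (rank_leq_col _).
move=> E; subst p2.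
set Z := map_mx intr Zi in ME rk.
have fZ : row_free Z by rewrite -row_leq_rank.
have dZ : \det Z != 0 by move: fZ; rewrite row_free_unit unitmxE unitfE.
have dZE : \det Z = (\det Zi)%:~R by rewrite det_map_mx.
have dZ1 : 1 <= (\det Z) ^+ 2.
  rewrite -(ger0_norm (sqr_ge0 (\det Z))) normrX dZE -intr_norm -abszE.
  have : (0 < `|\det Zi|)%N by rewrite absz_gt0; move: dZ; rewrite dZE intr_eq0.
  case: `|\det Zi|%N => // k _.
  by rewrite -natrX ler1n expn_gt0.
rewrite /= in V1 V2; rewrite V1 V2 /latt_vol ME trmx_mul !mulmxA det_mulmx -mulmxA det_mulmx det_tr.
set g := \det (M2 *m M2^T).
case: (lerP g 0) => hg.
  have -> : Num.sqrt g = 0 by apply/eqP; rewrite sqrtr_eq0.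
  exact: sqrtr_ge0.
have -> : \det Z * g * \det Z = \det Z ^+ 2 * g by rewrite expr2; ring.
rewrite ler_sqrt; last by rewrite mulr_ge0 ?sqr_ge0 // ltW.
by rewrite -{1}(mul1r g) ler_wpM2r // ltW.
Qed.

End P6.

Section P7.
Variables (R : realType) (d : nat) (Bm : 'M[R]_d) (K : set (set 'rV[R]_d)) (F : set 'rV[R]_d -> R).
Hypothesis fBm : row_free Bm.
Hypothesis hK : cell_complex K.
Hypothesis hpK : periodic_complex Bm K.
Hypothesis hpF : periodic_filter Bm K F.
Local Notation phi := (proj_torus Bm).
Local Notation L := (latt Bm).

Lemma Y_pre t : phi @^-1` (torus_sublevel Bm K F t) = Yset K F t.
Proof.
apply/seteqP; split => z.
  move=> [w [s [Ks Fs] sw] /phiP hz].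
  have Lu : L (z - w) by rewrite -opprB; apply: lattN.
  exists (translate (z - w) s).
    by split; [apply: hpK | rewrite hpF].
  by apply/translateE; rewrite opprB addrC subrK.
by move=> hz; exists z.
Qed.

Lemma LP_comp t (B : set (torus Bm)) : is_component (torus_sublevel Bm K F t) B ->
  forall x, (phi @^-1` B) x -> exists N, [/\ open N, N x &
    (phi @^-1` B) `&` N `<=` connected_component (phi @^-1` B) x].
Proof.
move=> [b Xb BE] x Px.
have BX : B `<=` torus_sublevel Bm K F t by rewrite BE; apply: connected_component_sub.
have Yx : Yset K F t x by rewrite -Y_pre; apply: BX.
have cellP : forall sigma, K sigma -> connected sigma /\ closed sigma.
  by move=> s Ks; apply: cell_props hK Ks.
have [N [oN Nx [C [cC Cx CY YNC]]]] := Y_local hK cellP Yx.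
exists N; split => //.
have CP : C `<=` phi @^-1` B.
  have BE' : B = connected_component (torus_sublevel Bm K F t) (phi x).
    by rewrite BE; apply: same_connected_component; rewrite -BE.
  move=> z Cz; rewrite /preimage /= BE'.
  apply: (connected_component_max (B := phi @` C)) => //.
  - by move=> q [w Cw <-]; have := CY _ Cw; rewrite -Y_pre.
  - apply: connected_continuous_connected cC _.
    by apply: continuous_subspaceT; apply: phi_cont.
have CcP : C `<=` connected_component (phi @^-1` B) x.
  by apply: connected_component_max.
move=> z [Pz Nz]; apply: CcP; apply: YNC; split => //.
by rewrite -Y_pre; apply: BX.
Qed.

End P7.

Lemma period_subgrp (R : realType) d (Bm : 'M[R]_d) (gam : set 'rV[R]_d) :
  subgrp (period_latt Bm gam).
Proof.
split.
  split; first exact: latt0.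
  by apply/seteqP; split => x; [move/translateE; rewrite subr0 | move=> h; apply/translateE; rewrite subr0].
move=> u v [Lu Tu] [Lv Tv]; split; first exact: lattB.
by rewrite -translate_comp Tu -{1}Tv translateK.
Qed.

Lemma period_dimvol (R : realType) d (Bm : 'M[R]_d) (gam : set 'rV[R]_d) :
  row_free Bm -> is_latt_dim_vol (period_latt Bm gam) (latt_dim_vol (period_latt Bm gam)).
Proof.
move=> fB; apply: xgetPex.
have [p [M [fM E]]] := subgrp_basis fB (period_subgrp Bm gam) (fun u h => h.1).
by exists (p, latt_vol M); exists M.
Qed.

Lemma nu_ge0 (R : realType) q : 0 <= nu R q.
Proof.
have h : forall n, 0 <= nu R n /\ 0 <= nu R n.+1.
  elim=> [|n [h1 h2]]; first by split => //=; rewrite ler0n.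
  split => //=; apply: mulr_ge0 => //; apply: divr_ge0; last exact: ler0n.
  by apply: mulr_ge0; [rewrite ler0n | apply: pi_ge0].
exact: (h q).1.
Qed.

Unset Implicit Arguments.

Theorem mainTheorem7 (R : realType) (d : nat) (Bm : 'M[R]_d)
    (K : set (set 'rV[R]_d)) (F : set 'rV[R]_d -> R) :
  row_free Bm ->
  cell_complex K -> periodic_complex Bm K ->
  is_filter K F -> periodic_filter Bm K F ->
  forall (s t : R) (A B : set (torus Bm)),
    is_component (torus_sublevel Bm K F s) A ->
    is_component (torus_sublevel Bm K F t) B ->
    s <= t -> A `<=` B ->
    mono_le (freq B) (freq A).
Proof.
move=> fBm hK hpK _ hpF s t A B cA cB _ AB.
pose PA := proj_torus Bm @^-1` A; pose PB := proj_torus Bm @^-1` B.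
have shadow_ex : forall (G : set (torus Bm)) (S : set (torus Bm)),
    is_component S G -> exists y, is_shadow G (connected_component (proj_torus Bm @^-1` G) y)
      /\ (proj_torus Bm @^-1` G) y.
  move=> G S [g Sg GE].
  have [y yg] := phi_surj g.
  have Py : (proj_torus Bm @^-1` G) y.
    by rewrite /preimage /= yg GE; apply: connected_component_refl.
  by exists y; split => //; exists y.
have chosen : forall (G S : set (torus Bm)), is_component S G ->
    exists y, (proj_torus Bm @^-1` G) y /\
      xget set0 (is_shadow G) = connected_component (proj_torus Bm @^-1` G) y.
  move=> G S cG; have [y [hy Py]] := shadow_ex G S cG.
  have : is_shadow G (xget set0 (is_shadow G)) by apply: xgetPex; exists (connected_component (proj_torus Bm @^-1` G) y).
  by move=> [y' Py' ->]; exists y'.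
have [xA [PxA gA]] := chosen A _ cA.
have [yB [PyB gB]] := chosen B _ cB.
have PxB : PB xA by apply: AB.
have linvB : linv Bm PB by move=> x u Lu Px; rewrite /PB /preimage /= phiD.
set gA' := xget set0 (is_shadow A) in gA.
set gB' := xget set0 (is_shadow B) in gB.
have sub1 : period_latt Bm gA' `<=` period_latt Bm (connected_component PB xA).
  move=> u [Lu Tu]; split => //.
  rewrite (cc_translate _ linvB Lu).
  have hA : gA' (xA + u) by rewrite -Tu; apply/translateE; rewrite addrK gA; apply: connected_component_refl.
  have : connected_component PB xA (xA + u).
    apply: (connected_component_max (B := gA')) => //.
    - by rewrite gA; apply: connected_component_refl.
    - by rewrite gA => z /connected_component_sub; apply: AB.
    - by rewrite gA; apply: component_connected.
  by move/same_connected_component.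
have cBc : connected B by case: cB => b _ ->; apply: component_connected.
have [w Lw Ew] := shadow_translate cBc (LP_comp hK hpK hpF cB) PyB PxB.
have sub2 : period_latt Bm (connected_component PB xA) `<=` period_latt Bm gB'.
  move=> u [Lu Tu]; split => //.
  rewrite Ew translateC in Tu.
  by rewrite gB -(translateK w (translate u _)) Tu translateK.
have [le1 eq1] := dimvol_cmp (fun u h => sub2 u (sub1 u h)) (period_dimvol gA' fBm) (period_dimvol gB' fBm).
rewrite /freq /mono_le /= -/gA' -/gB'.
set pA := latt_dim_vol (period_latt Bm gA') in le1 eq1 *.
set pB := latt_dim_vol (period_latt Bm gB') in le1 eq1 *.
have pBd : (pB.1 <= d)%N.
  by have [M [fM _ _]] := period_dimvol gB' fBm; apply: row_free_le fM.
case: (ltngtP pA.1 pB.1) => hp.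
- by left; lia.
- by exfalso; move: le1; rewrite leqNgt hp.
right; split; first by rewrite hp.
rewrite hp; apply: ler_wpM2r; first exact: nu_ge0.
apply: ler_wpM2r; first by rewrite invr_ge0 sqrtr_ge0.
exact: eq1.
Qed.
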